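(* Let $P=\{p_1,\dots,p_n\}\subset\mathbb{R}^2$ be in general position and let $M\colon(\mathbb{R}^2)^n\to\mathbb{R}^{\binom n2}$, $M(v)=(\langle p_i-p_j,v_i-v_j\rangle)_{i<j}$. For $\delta\in\mathbb{R}^{\binom n2}$ the following are equivalent: (a) $\delta\in\operatorname{Im}M$; (b) for every four distinct indices $i_1,i_2,i_3,i_4$, $\sum_{i<j,\ i,j\in\{i_1,\dots,i_4\}} w_{ij}\delta_{ij}=0$, where $(w_{ij})$ is a nonzero self-stress of the complete graph on $p_{i_1},\dots,p_{i_4}$.
   Context: General position: no three points collinear. A self-stress of a graph on points $q_i$ is an assignment $w_{ij}$ to edges with $\sum_{j:ij\text{ edge}}w_{ij}(q_i-q_j)=0$ for every vertex $i$; for four points in general position the complete graph has a unique self-stress up to scaling. *)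

(* Defs.v *)
From HB Require Import structures.
From mathcomp Require Import all_boot all_order all_algebra.
Set Implicit Arguments. Unset Strict Implicit. Unset Printing Implicit Defensive.
Import Order.TTheory GRing.Theory Num.Theory.
Local Open Scope ring_scope.

Definition dot2 {R : ringType} (u v : 'rV[R]_2) : R :=
  \sum_(k < 2) u 0 k * v 0 k.

Definition det2 {R : ringType} (u v : 'rV[R]_2) : R :=
  u 0 0 * v 0 1 - u 0 1 * v 0 0.

Definition general_position {R : ringType} (n : nat) (p : 'I_n -> 'rV[R]_2) :=
  injective p /\
  forall i j k : 'I_n, i != j -> j != k -> i != k ->
    det2 (p j - p i) (p k - p i) != 0.

Definition self_stress {R : ringType} (n : nat) (p : 'I_n -> 'rV[R]_2)
    (S : {set 'I_n}) (w : 'I_n -> 'I_n -> R) :=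
  (forall a b, a \in S -> b \in S -> a != b -> w a b = w b a) /\
  (forall a, a \in S -> \sum_(b in S | b != a) w a b *: (p a - p b) = 0).

Definition nonzero_on {R : ringType} (n : nat) (S : {set 'I_n})
    (w : 'I_n -> 'I_n -> R) :=
  exists a b, [/\ a \in S, b \in S, a != b & w a b != 0].

(* The linear map M : (R^2)^n -> R^(n choose 2); a vector of R^(n choose 2)
   is represented by delta : 'I_n -> 'I_n -> R, only entries with i < j
   being meaningful. *)
Definition in_image_M {R : ringType} (n : nat) (p : 'I_n -> 'rV[R]_2)
    (delta : 'I_n -> 'I_n -> R) :=
  exists v : 'I_n -> 'rV[R]_2,
    forall i j : 'I_n, (i < j)%N -> delta i j = dot2 (p i - p j) (v i - v j).

(* Main.v *)
Require Import Defs.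
From HB Require Import structures.
From mathcomp Require Import all_boot all_order all_algebra.
From mathcomp Require Import ring lra zify.
Import Order.TTheory GRing.Theory Num.Theory.
Local Open Scope ring_scope.
Set Implicit Arguments. Unset Strict Implicit. Unset Printing Implicit Defensive.

Section Aux.
Variable R : realFieldType.

Lemma dot2E (u v : 'rV[R]_2) : dot2 u v = u 0 0 * v 0 0 + u 0 1 * v 0 1.
Proof.
rewrite /dot2 big_ord_recr big_ord_recr big_ord0 /= add0r.
rewrite (_ : widen_ord _ _ = 0); last exact: val_inj.
by rewrite (_ : ord_max = 1) //; exact: val_inj.
Qed.

Lemma row2P (u v : 'rV[R]_2) : u 0 0 = v 0 0 -> u 0 1 = v 0 1 -> u = v.
Proof.
move=> H0 H1; apply/rowP => j; case: j => [[|[|//]]] Hj.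
  by rewrite (_ : Ordinal Hj = 0) //; apply: val_inj.
by rewrite (_ : Ordinal Hj = 1) //; apply: val_inj.
Qed.

Lemma dot2_sum I (r : seq I) (P : pred I) (F : I -> 'rV[R]_2) y :
  dot2 (\sum_(i <- r | P i) F i) y = \sum_(i <- r | P i) dot2 (F i) y.
Proof.
apply: (big_morph (fun x => dot2 x y)).
  by move=> a b; rewrite !dot2E !mxE; ring.
by rewrite dot2E !mxE; ring.
Qed.

Lemma dot2Z c (x y : 'rV[R]_2) : dot2 (c *: x) y = c * dot2 x y.
Proof. by rewrite !dot2E !mxE; ring. Qed.

Lemma sum4 n (a b c d : 'I_n) (F : 'I_n -> R) : uniq [:: a; b; c; d] ->
  \sum_(x in [set a; b; c; d]) F x = F a + F b + F c + F d.
Proof.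
move=> U.
have -> : [set a; b; c; d] = a |: (b |: (c |: [set d])).
  by apply/setP => x; rewrite !inE; case: (x == a); case: (x == b); case: (x == c).
move: U; rewrite /= !inE !negb_or !andbT => /and3P [/and3P[ab ac ad] /andP[bc bd] cd].
rewrite big_setU1 ?inE ?negb_or ?ab ?ac ?ad //.
rewrite big_setU1 ?inE ?negb_or ?bc ?bd //.
rewrite big_setU1 ?inE ?cd // big_set1.
by rewrite -!addrA.
Qed.

Lemma sumV4 n (a b c d : 'I_n) (F : 'I_n -> 'rV[R]_2) : uniq [:: a; b; c; d] ->
  \sum_(x in [set a; b; c; d]) F x = F a + F b + F c + F d.
Proof.
move=> U.
have -> : [set a; b; c; d] = a |: (b |: (c |: [set d])).
  by apply/setP => x; rewrite !inE; case: (x == a); case: (x == b); case: (x == c).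
move: U; rewrite /= !inE !negb_or !andbT => /and3P [/and3P[ab ac ad] /andP[bc bd] cd].
rewrite big_setU1 ?inE ?negb_or ?ab ?ac ?ad //.
rewrite big_setU1 ?inE ?negb_or ?bc ?bd //.
rewrite big_setU1 ?inE ?cd // big_set1.
by rewrite -!addrA.
Qed.


Lemma stress_orth n (p : 'I_n -> 'rV[R]_2) (S : {set 'I_n}) w v :
  self_stress p S w ->
  \sum_(a in S) \sum_(b in S | (a < b)%N) w a b * dot2 (p a - p b) (v a - v b) = 0.
Proof.
case=> Wsym Weq.
pose g a b := w a b * dot2 (p a - p b) (v a).
have E a b : a \in S -> b \in S -> (a < b)%N ->
    w a b * dot2 (p a - p b) (v a - v b) = g a b + g b a.
  move=> aS bS ab; rewrite /g (Wsym b a) //; last first.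
    by rewrite -(inj_eq val_inj) /= gtn_eqF.
  by rewrite !dot2E !mxE; ring.
rewrite (eq_bigr (fun a : 'I_n => \sum_(b in S | (a < b)%N) (g a b + g b a))); last first.
  by move=> a aS; apply: eq_bigr => b /andP[bS ab]; exact: E.
under eq_bigr do rewrite big_split /=.
rewrite big_split /=.
rewrite [X in _ + X](exchange_big_dep (fun b => b \in S)) /=; last by move=> a b _ /andP[].
rewrite -big_split /=; apply: big1 => a aS.
have -> : \sum_(i in S | (a < i)%N) g a i + \sum_(i | (i \in S) && ((a \in S) && (i < a)%N)) g a i
   = \sum_(b in S | b != a) g a b.
  rewrite (bigID (fun b : 'I_n => (a < b)%N) (fun b : 'I_n => (b \in S) && (b != a))) /=.
  congr (_ + _); apply: eq_bigl => b /=; rewrite ?aS /=.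
    case: (b \in S) => //=; rewrite -(inj_eq val_inj) /=.
    by case: ltngtP.
  case: (b \in S) => //=; rewrite -(inj_eq val_inj) /=.
  by case: ltngtP.
rewrite /g.
under eq_bigr do rewrite -dot2Z.
by rewrite -dot2_sum Weq // dot2E !mxE; ring.
Qed.


Lemma stress_lam n (p : 'I_n -> 'rV[R]_2) (S : {set 'I_n}) (lam : 'I_n -> R) :
  \sum_(b in S) lam b = 0 -> \sum_(b in S) lam b *: p b = 0 ->
  self_stress p S (fun a b => lam a * lam b).
Proof.
move=> H1 H2; split; first by move=> a b _ _ _; exact: mulrC.
move=> a aS.
have H := bigD1 (op := +%R) (x := 0) (F := fun b => (lam a * lam b) *: (p a - p b)) a aS.
rewrite /= subrr scaler0 add0r in H; rewrite -H.
under eq_bigr do rewrite scalerBr.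
rewrite sumrB -scaler_suml -mulr_sumr H1 mulr0 scale0r sub0r.
under eq_bigr do rewrite -scalerA.
by rewrite -scaler_sumr H2 scaler0 oppr0.
Qed.

Definition lam4 (q1 q2 q3 q4 : 'rV[R]_2) : R * R * R * R :=
  (det2 (q3 - q2) (q4 - q2), - det2 (q3 - q1) (q4 - q1),
   det2 (q2 - q1) (q4 - q1), - det2 (q2 - q1) (q3 - q1)).

Lemma lam4_sum q1 q2 q3 q4 l1 l2 l3 l4 :
  lam4 q1 q2 q3 q4 = (l1, l2, l3, l4) -> l1 + l2 + l3 + l4 = 0.
Proof. by case=> <- <- <- <-; rewrite /det2 !mxE; ring. Qed.

Lemma lam4_vsum q1 q2 q3 q4 l1 l2 l3 l4 :
  lam4 q1 q2 q3 q4 = (l1, l2, l3, l4) ->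
  l1 *: q1 + l2 *: q2 + l3 *: q3 + l4 *: q4 = 0.
Proof. by case=> <- <- <- <-; apply: row2P; rewrite /det2 !mxE; ring. Qed.

Lemma in4 n (x a b c d : 'I_n) : x \in [set a; b; c; d] -> [\/ x = a, x = b, x = c | x = d].
Proof.
rewrite !inE -!orbA => /or4P [] /eqP; by [constructor 1|constructor 2|constructor 3|constructor 4].
Qed.

End Aux.

Definition mkrow {R : realFieldType} (x y : R) : 'rV[R]_2 :=
  \row_(j < 2) (if j == 0 then x else y).

Lemma mkrow0 (R : realFieldType) (x y : R) : mkrow x y 0 0 = x.
Proof. by rewrite /mkrow mxE. Qed.
Lemma mkrow1 (R : realFieldType) (x y : R) : mkrow x y 0 1 = y.
Proof. by rewrite /mkrow mxE. Qed.

Lemma sqsum_neq0 (R : realFieldType) (u : 'rV[R]_2) : u != 0 ->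
  u 0 0 ^+ 2 + u 0 1 ^+ 2 != 0.
Proof.
apply: contraNneq => /eqP; rewrite paddr_eq0 ?sqr_ge0 // !sqrf_eq0 => /andP[/eqP h0 /eqP h1].
by apply/eqP; apply: row2P; by rewrite mxE.
Qed.

Unset Implicit Arguments.

Theorem lemma5p1 (R : realFieldType) (n : nat) (p : 'I_n -> 'rV[R]_2)
    (delta : 'I_n -> 'I_n -> R) :
  general_position p ->
  (in_image_M p delta <->
   forall i1 i2 i3 i4 : 'I_n,
     uniq [:: i1; i2; i3; i4] ->
     forall w : 'I_n -> 'I_n -> R,
       self_stress p [set i1; i2; i3; i4] w ->
       nonzero_on [set i1; i2; i3; i4] w ->
       \sum_(a in [set i1; i2; i3; i4])
         \sum_(b in [set i1; i2; i3; i4] | (a < b)%N) w a b * delta a b = 0).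
Proof.
move=> [Pinj GP]; split.
  case=> v Hv i1 i2 i3 i4 U w Ws _.
  rewrite -[RHS](stress_orth v Ws).
  apply: eq_bigr => a _; apply: eq_bigr => b /andP[_ ab]; by rewrite Hv.
move=> H.
case: n p delta Pinj GP H => [|[|m]] p delta Pinj GP H.
- by exists (fun _ => 0) => -[].
- by exists (fun _ => 0) => i j; rewrite (ord1 i) (ord1 j).
pose i0 : 'I_m.+2 := ord0.
pose i1 : 'I_m.+2 := Ordinal (isT : (1 < m.+2)%N).
have i01 : i0 != i1 by [].
pose a1 := p i1 - p i0.
pose N := a1 0 0 ^+ 2 + a1 0 1 ^+ 2.
have N0 : N != 0.
  apply: sqsum_neq0; rewrite subr_eq0; apply/eqP => E.
  by move: (Pinj _ _ E).
pose v1 := (delta i0 i1 / N) *: a1.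
pose sol (k : 'I_m.+2) :=
  let a := p i0 - p k in let b := p i1 - p k in
  let al := - delta i0 k in let be := dot2 b v1 - delta i1 k in
  let D := det2 a b in
  mkrow ((al * b 0 1 - be * a 0 1) / D) ((a 0 0 * be - b 0 0 * al) / D).
pose v (x : 'I_m.+2) := if x == i0 then 0 else if x == i1 then v1 else sol x.
have ne0 (k : 'I_m.+2) : (1 < k)%N -> (k == i0) = false.
  by move=> Hk; apply/negbTE/eqP => E; rewrite E in Hk.
have ne1 (k : 'I_m.+2) : (1 < k)%N -> (k == i1) = false.
  by move=> Hk; apply/negbTE/eqP => E; rewrite E in Hk.
have F01 : delta i0 i1 = dot2 (p i0 - p i1) (v i0 - v i1).
  have i10 : (i1 == i0) = false by [].
  rewrite /v eqxx i10 eqxx.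
  move: N0; rewrite /v1 /N /a1 dot2E !mxE => N0.
  field; exact: N0.
have F0k (k : 'I_m.+2) : (1 < k)%N -> delta i0 k = dot2 (p i0 - p k) (v i0 - v k).
  move=> Hk; have D0 := GP k i0 i1 (negbT (ne0 k Hk)) i01 (negbT (ne1 k Hk)).
  rewrite /v eqxx ne0 // ne1 // /sol /=.
  move: D0; rewrite /det2 /v1 /N /a1 !dot2E => D0.
  rewrite !mxE eqxx (_ : (1 == 0 :> 'I_2) = false) //.
  move: D0 N0; rewrite /N /a1 !mxE => D0 N0.
  field; by rewrite D0 N0.
have F1k (k : 'I_m.+2) : (1 < k)%N -> delta i1 k = dot2 (p i1 - p k) (v i1 - v k).
  move=> Hk; have D0 := GP k i0 i1 (negbT (ne0 k Hk)) i01 (negbT (ne1 k Hk)).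
  have i10 : (i1 == i0) = false by [].
  rewrite /v eqxx i10 ne0 // ne1 // /sol /=.
  move: D0; rewrite /det2 /v1 /N /a1 !dot2E => D0.
  rewrite !mxE eqxx (_ : (1 == 0 :> 'I_2) = false) //.
  move: D0 N0; rewrite /N /a1 !mxE => D0 N0.
  field; by rewrite D0 N0.
have Fkl (k l : 'I_m.+2) : (1 < k)%N -> (k < l)%N ->
    delta k l = dot2 (p k - p l) (v k - v l).
  move=> Hk Hkl.
  have Hl : (1 < l)%N by exact: ltn_trans Hkl.
  have kl : (k == l) = false by rewrite -(inj_eq val_inj) /= ltn_eqF.
  have U : uniq [:: i0; i1; k; l].
    by rewrite /= !inE !negb_or -!(inj_eq val_inj) /=; lia.
  case E: (lam4 (p i0) (p i1) (p k) (p l)) => [[[L1 L2] L3] L4].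
  have Ls := lam4_sum E.
  have Lv := lam4_vsum E.
  have [_ _ L3E L4E] : [/\ L1 = det2 (p k - p i1) (p l - p i1),
      L2 = - det2 (p k - p i0) (p l - p i0),
      L3 = det2 (p i1 - p i0) (p l - p i0) &
      L4 = - det2 (p i1 - p i0) (p k - p i0)] by case: E => <- <- <- <-.
  pose lam x := if x == i0 then L1 else if x == i1 then L2 else if x == k then L3 else L4.
  have lam0 : lam i0 = L1 by rewrite /lam eqxx.
  have lam1 : lam i1 = L2 by rewrite /lam eqxx.
  have lamk : lam k = L3 by rewrite /lam ne0 // ne1 // eqxx.
  have laml : lam l = L4 by rewrite /lam ne0 // ne1 // eq_sym kl.
  pose S := [set i0; i1; k; l].
  have Ws : self_stress p S (fun a b => lam a * lam b).
    apply: stress_lam; first by rewrite sum4 // lam0 lam1 lamk laml.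
    by rewrite sumV4 // lam0 lam1 lamk laml.
  have kS : k \in S by rewrite !inE eqxx !orbT.
  have lS : l \in S by rewrite !inE eqxx !orbT.
  have L3n : L3 != 0.
    rewrite L3E; apply: GP => //; rewrite -(inj_eq val_inj) /=; lia.
  have L4n : L4 != 0.
    rewrite L4E oppr_eq0; apply: GP => //; rewrite -(inj_eq val_inj) /=; lia.
  have Wnz : nonzero_on S (fun a b => lam a * lam b).
    exists k, l; split => //; first by rewrite kl.
    by rewrite lamk laml mulf_neq0.
  have Hd := H _ _ _ _ U _ Ws Wnz.
  have Ho := stress_orth v Ws.
  pose e a b := delta a b - dot2 (p a - p b) (v a - v b).
  have Z : \sum_(a in S) \sum_(b in S | (a < b)%N) (lam a * lam b) * e a b = 0.
    transitivity (\sum_(a in S) \sum_(b in S | (a < b)%N) (lam a * lam b) * delta a b -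
       \sum_(a in S) \sum_(b in S | (a < b)%N) (lam a * lam b) * dot2 (p a - p b) (v a - v b)).
      rewrite -sumrB; apply: eq_bigr => a _; rewrite -sumrB; apply: eq_bigr => b _.
      by rewrite mulrBr.
    by rewrite Hd Ho subrr.
  move: Z; rewrite (bigD1 k) //= (bigD1 l) /=; last by rewrite lS.
  rewrite big1 ?addr0; last first.
    move=> b /andP[/andP[bS kb] bl].
    exfalso; case: (in4 bS) => E'; rewrite E' in kb bl; rewrite ?eqxx // in bl; move: kb Hk Hkl; rewrite /i0 /i1; clear; simpl; lia.
  rewrite big1 ?addr0; last first.
    move=> a /andP[aS ak]; apply: big1 => b /andP[bS ab].
    case: (in4 aS) => Ea; rewrite Ea in ak ab *.
    - case: (in4 bS) => Eb; rewrite Eb in ab *.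
      + by [].
      + by rewrite /e -F01 subrr mulr0.
      + by rewrite /e -F0k // subrr mulr0.
      + by rewrite /e -F0k // subrr mulr0.
    - case: (in4 bS) => Eb; rewrite Eb in ab *.
      + by [].
      + by [].
      + by rewrite /e -F1k // subrr mulr0.
      + by rewrite /e -F1k // subrr mulr0.
    - by rewrite eqxx in ak.
    - exfalso; case: (in4 bS) => Eb; rewrite Eb in ab; move: ab Hk Hkl; rewrite /i0 /i1; clear; simpl; lia.
  move/eqP; rewrite mulf_eq0 lamk laml mulf_eq0.
  rewrite (negbTE L3n) (negbTE L4n) /= /e subr_eq0 => /eqP //.
exists v => i j ij.
case Hi: (nat_of_ord i) => [|[|i']].
- have -> : i = i0 by apply: val_inj.
  case Hj: (nat_of_ord j) => [|[|j']].
  + by rewrite Hi Hj in ij.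
  + by have -> : j = i1 by apply: val_inj.
  + by apply: F0k; rewrite Hj.
- have -> : i = i1 by apply: val_inj.
  by apply: F1k; rewrite -Hi.
- by apply: Fkl => //; rewrite Hi.
Qed.
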